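(* Assume the chain $\{z_t\}$ described in the context is stationary with stationary distribution $\pi$. Let $N_0\ge1$ be an integer such that every entry of the $N_0$-step transition matrix $M^{(N_0)}$ of $\{z_t\}$ is positive. Let $\delta=\min_{i,j\in[Z]}M^{(N_0)}_{i,j}>0$. Let $f:\mathbb{H}^N\times\mathbb{B}^N\to\mathbb{B}^N$ be fixed, and let the loss satisfy $|l(f,z)|\le B$ for all $z$, for some constant $B>0$. For a sample $S=(z_1,\dots,z_T)$ of the chain, define $err_S^T(f)=\frac1T\sum_{t=1}^T l(f,z_t)$ and $err_\pi(f)=E_{z\sim\pi}\,l(f,z)$. Then for every $\epsilon>0$ and every $T>2BN_0/(Z\delta\epsilon)$, $$P\big(|err_S^T(f)-err_\pi(f)|\ge\epsilon\big)\le 2\exp\!\left(-\frac{Z^2\delta^2\,(T\epsilon-2BN_0/(Z\delta))^2}{2TB^2N_0^2}\right).$$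
   Context: $\{z_t\}$ is the Markov chain $z_t=(h_t,b_t,b_{t+1})$. It is a time-homogeneous, irreducible, aperiodic Markov chain on a finite state space of $Z$ states, identified with $[Z]=\{1,\dots,Z\}$, with transition matrix $M$. Here $h_t\in\mathbb{H}^N$ (joint feedback) and $b_t\in\mathbb{B}^N$ (joint behavior), with $\mathbb{H},\mathbb{B}$ finite. For a prediction function $f:\mathbb{H}^N\times\mathbb{B}^N\to\mathbb{B}^N$ and a state $z=(h,b,b')$, the loss is $l(f,z)=\ell(f(h,b),b')$ for a fixed loss function $\ell$ on $\mathbb{B}^N\times\mathbb{B}^N$; an example is the 0-1 loss $\mathbf 1[f(h,b)\ne b']$. *)

(* Defs.v *)
From mathcomp Require Import all_boot.
From Stdlib Require Import Reals.
Set Implicit Arguments. Unset Strict Implicit. Unset Printing Implicit Defensive.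

Local Open Scope R_scope.

Definition vecH (H : finType) (N : nat) := {ffun 'I_N -> H}.
Definition vecB (Bt : finType) (N : nat) := {ffun 'I_N -> Bt}.

Definition loss (H Bt : finType) (N : nat)
  (f : vecH H N -> vecB Bt N -> vecB Bt N) (ell : vecB Bt N -> vecB Bt N -> R)
  (z : vecH H N * vecB Bt N * vecB Bt N) : R :=
  let '(h, b, b') := z in ell (f h b) b'.

Definition stochastic (Z : nat) (M : 'I_Z -> 'I_Z -> R) : Prop :=
  (forall i j, 0 <= M i j) /\ (forall i, \big[Rplus/0]_(j < Z) M i j = 1).

Fixpoint Mpow (Z : nat) (M : 'I_Z -> 'I_Z -> R) (n : nat) : 'I_Z -> 'I_Z -> R :=
  match n with
  | O => fun i j => if i == j then 1 else 0
  | S n' => fun i j => \big[Rplus/0]_(k < Z) (Mpow M n' i k * M k j)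
  end.

Definition irreducible (Z : nat) (M : 'I_Z -> 'I_Z -> R) : Prop :=
  forall i j, exists n, 0 < Mpow M n i j.

Definition stationary_dist (Z : nat) (M : 'I_Z -> 'I_Z -> R) (pi : 'I_Z -> R) : Prop :=
  (forall i, 0 <= pi i) /\ \big[Rplus/0]_(i < Z) pi i = 1 /\
  (forall j, \big[Rplus/0]_(i < Z) (pi i * M i j) = pi j).

(* Probability of the sample path s = (z_1,...,z_T) (indexed by 'I_T) for the
   stationary chain started from pi:  pi(z_1) * prod_t M(z_t, z_{t+1}). *)
Definition path_prob (Z T : nat) (M : 'I_Z -> 'I_Z -> R) (pi : 'I_Z -> R)
  (s : {ffun 'I_T -> 'I_Z}) : R :=
  \big[Rmult/1]_(t : 'I_T | nat_of_ord t == 0%nat) pi (s t) *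
  \big[Rmult/1]_(t : 'I_T) \big[Rmult/1]_(u : 'I_T | nat_of_ord u == (nat_of_ord t).+1 :> nat)
      M (s t) (s u).

Definition prob (Z T : nat) (M : 'I_Z -> 'I_Z -> R) (pi : 'I_Z -> R)
  (E : {ffun 'I_T -> 'I_Z} -> bool) : R :=
  \big[Rplus/0]_(s : {ffun 'I_T -> 'I_Z}) (if E s then path_prob M pi s else 0).

Definition Rleb (x y : R) : bool := if Rle_dec x y then true else false.

Definition err_S (Z T : nat) (l : 'I_Z -> R) (s : {ffun 'I_T -> 'I_Z}) : R :=
  / INR T * \big[Rplus/0]_(t : 'I_T) l (s t).

Definition err_pi (Z : nat) (pi : 'I_Z -> R) (l : 'I_Z -> R) : R :=
  \big[Rplus/0]_(i < Z) (pi i * l i).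

(* Main.v *)
Require Import Defs.
From Coquelicot Require Import Coquelicot.
From HB Require Import structures.
From Stdlib Require Import Reals Lra Lia.
From mathcomp Require Import all_boot.
Local Open Scope R_scope.

Lemma Rplus_assoc' : associative Rplus. Proof. by move=> x y z; rewrite Rplus_assoc. Qed.
Lemma Rmult_assoc' : associative Rmult. Proof. by move=> x y z; rewrite Rmult_assoc. Qed.
HB.instance Definition _ := Monoid.isComLaw.Build R 0 Rplus Rplus_assoc' Rplus_comm Rplus_0_l.
HB.instance Definition _ := Monoid.isComLaw.Build R 1 Rmult Rmult_assoc' Rmult_comm Rmult_1_l.
HB.instance Definition _ := Monoid.isMulLaw.Build R 0 Rmult Rmult_0_l Rmult_0_r.
HB.instance Definition _ := Monoid.isAddLaw.Build R Rmult Rplus Rmult_plus_distr_r Rmult_plus_distr_l.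

Lemma sum_le (I : Type) (r : seq I) (P : pred I) (F G : I -> R) :
  (forall i, P i -> F i <= G i) ->
  \big[Rplus/0]_(i <- r | P i) F i <= \big[Rplus/0]_(i <- r | P i) G i.
Proof. move=> H; apply: (big_ind2 (fun x y => x <= y)) => //; [lra | move=> *; lra]. Qed.

Lemma sum_ge0 (I : Type) (r : seq I) (P : pred I) (F : I -> R) :
  (forall i, P i -> 0 <= F i) -> 0 <= \big[Rplus/0]_(i <- r | P i) F i.
Proof. move=> H; apply: (big_ind (fun x => 0 <= x)) => //; [lra | move=> *; lra]. Qed.

Lemma prod_ge0 (I : Type) (r : seq I) (P : pred I) (F : I -> R) :
  (forall i, P i -> 0 <= F i) -> 0 <= \big[Rmult/1]_(i <- r | P i) F i.
Proof. move=> H; apply: (big_ind (fun x => 0 <= x)) => //; [lra | move=> *; nra]. Qed.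

Lemma exp_convex lam a b x : a <= x <= b ->
  exp (lam * x) * (b - a) <= (b - x) * exp (lam * a) + (x - a) * exp (lam * b).
Proof.
move=> Hx.
have Ha : exp (lam * a) = exp (lam * x) * exp (lam * (a - x)).
  by rewrite -exp_plus; congr exp; ring.
have Hb : exp (lam * b) = exp (lam * x) * exp (lam * (b - x)).
  by rewrite -exp_plus; congr exp; ring.
have H1 := exp_ineq1_le (lam * (a - x)).
have H2 := exp_ineq1_le (lam * (b - x)).
have He := exp_pos (lam * x).
rewrite Ha Hb.
have E : (b - x) * (1 + lam * (a - x)) + (x - a) * (1 + lam * (b - x)) = b - a by ring.
have F : b - a <= (b - x) * exp (lam * (a - x)) + (x - a) * exp (lam * (b - x)).
  rewrite -E; apply: Rplus_le_compat; apply: Rmult_le_compat_l; lra.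
have -> : (b - x) * (exp (lam * x) * exp (lam * (a - x))) + (x - a) * (exp (lam * x) * exp (lam * (b - x)))
  = exp (lam * x) * ((b - x) * exp (lam * (a - x)) + (x - a) * exp (lam * (b - x))) by ring.
apply: Rmult_le_compat_l; lra.
Qed.
Lemma nonpos_deriv (f df : R -> R) :
  (forall x, 0 <= x -> is_derive f x (df x)) -> (forall x, 0 <= x -> df x <= 0) ->
  forall u, 0 <= u -> f u <= f 0.
Proof.
move=> Hd Hn u Hu.
case: (Req_dec u 0) => [->|Hu0]; first lra.
have [c [Hc1 Hc2]] : exists c, f u - f 0 = df c * (u - 0) /\ 0 < c < u.
  apply: MVT_cor2; first lra.
  move=> c Hc; apply/is_derive_Reals; apply: Hd; lra.
have := Hn c (ltac:(lra)).
nra.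
Qed.

Lemma Dpos th u : 0 <= th <= 1 -> 0 < 1 - th + th * exp u.
Proof.
move=> Hth; have := exp_pos u.
case: (Rle_lt_dec (exp u) 1) => H; nra.
Qed.

Lemma q_bound th u : 0 <= th <= 1 -> 0 <= u ->
  th * exp u / (1 - th + th * exp u) <= th + u / 4.
Proof.
move=> Hth Hu.
set f := fun x => th * exp x / (1 - th + th * exp x) - x / 4.
have : f u <= f 0.
  apply: (@nonpos_deriv f (fun x => th * exp x * (1 - th) / (1 - th + th * exp x)^2 - 1/4)).
  - move=> x Hx; rewrite /f.
    auto_derive; first by have := Dpos th x Hth; lra.
    have := Dpos th x Hth => HD. field. lra.
  - move=> x Hx.
    have HD := Dpos th x Hth.
    have He := exp_pos x.
    apply Rle_minus.
    apply (Rmult_le_reg_r ((1 - th + th * exp x)^2)); first by nra.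
    rewrite /Rdiv Rmult_assoc Rinv_l; last by nra.
    have := pow2_ge_0 ((1 - th) - th * exp x); nra.
  - done.
rewrite /f exp_0 Rmult_1_r.
have -> : 1 - th + th = 1 by ring.
lra.
Qed.

Lemma hoeff_scalar th u : 0 <= th <= 1 -> 0 <= u ->
  (1 - th + th * exp u) * exp (- th * u) <= exp (u^2/8).
Proof.
move=> Hth Hu.
set f := fun x => (1 - th + th * exp x) * exp (- th * x - x^2/8).
have : f u <= f 0.
  apply: (@nonpos_deriv f (fun x => exp (- th * x - x^2/8) * (th * exp x - (1 - th + th * exp x) * (th + x/4)))).
  - move=> x Hx; rewrite /f.
    auto_derive => //. have -> : (- th * x + - (x * (x * 1) * / 8)) = (- th * x - x ^ 2 / 8) by field. field.
  - move=> x Hx.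
    have HD := Dpos th x Hth.
    have := q_bound th x Hth Hx.
    have := exp_pos (- th * x - x ^ 2 / 8).
    move=> He Hq.
    have : th * exp x <= (1 - th + th * exp x) * (th + x/4).
      have Hk : th * exp x = (th * exp x / (1 - th + th * exp x)) * (1 - th + th * exp x) by field; lra.
      rewrite {1}Hk; nra.
    nra.
  - done.
rewrite /f exp_0 Rmult_1_r.
have -> : 1 - th + th = 1 by ring.
have -> : (- th * 0 - 0^2/8) = 0 by field.
rewrite exp_0 Rmult_1_r => H.
have Hk : (1 - th + th * exp u) * exp (- th * u) = (1 - th + th * exp u) * exp (- th * u - u^2/8) * exp (u^2/8).
  rewrite Rmult_assoc -exp_plus.
  by have -> : (- th * u - u ^ 2 / 8 + u ^ 2 / 8) = - th * u by field.
rewrite Hk; have := exp_pos (u^2/8); nra.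
Qed.

Lemma hoeffding (I : finType) (p X : I -> R) a r lam :
  (forall i, 0 <= p i) -> \big[Rplus/0]_i p i = 1 -> \big[Rplus/0]_i (p i * X i) = 0 ->
  (forall i, a <= X i <= a + r) -> 0 <= lam ->
  \big[Rplus/0]_i (p i * exp (lam * X i)) <= exp (lam^2 * r^2 / 8).
Proof.
move=> Hp H1 H0 HX Hl.
have Ha : a <= 0.
  have : \big[Rplus/0]_i (p i * a) <= \big[Rplus/0]_i (p i * X i).
    apply: sum_le => i _; have := HX i; have := Hp i; nra.
  by rewrite -big_distrl /= H1 H0; lra.
have Hb : 0 <= a + r.
  have : \big[Rplus/0]_i (p i * X i) <= \big[Rplus/0]_i (p i * (a + r)).
    apply: sum_le => i _; have := HX i; have := Hp i; nra.
  by rewrite -big_distrl /= H1 H0; lra.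
case: (Req_dec r 0) => Hr.
  have -> : \big[Rplus/0]_i (p i * exp (lam * X i)) = \big[Rplus/0]_i p i.
    apply: eq_bigr => i _; have := HX i; rewrite Hr => HXi.
    have -> : X i = 0 by lra.
    by rewrite Rmult_0_r exp_0 Rmult_1_r.
  rewrite H1 Hr; have := exp_pos 0; rewrite exp_0.
  have -> : lam ^ 2 * 0 ^ 2 / 8 = 0 by field.
  rewrite exp_0; lra.
have Hr' : 0 < r by have := HX; lra.
set b := a + r.
have E : \big[Rplus/0]_i (p i * exp (lam * X i)) <=
         \big[Rplus/0]_i (p i * (((b - X i) * exp (lam * a) + (X i - a) * exp (lam * b)) / r)).
  apply: sum_le => i _.
  apply: Rmult_le_compat_l; first exact: Hp.
  have := @exp_convex lam a b (X i) (HX i).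
  have -> : b - a = r by rewrite /b; ring.
  move=> Hc.
  apply (Rmult_le_reg_r r) => //.
  have -> : ((b - X i) * exp (lam * a) + (X i - a) * exp (lam * b)) / r * r =
            ((b - X i) * exp (lam * a) + (X i - a) * exp (lam * b)) by field; lra.
  exact Hc.
have E2 : \big[Rplus/0]_i (p i * (((b - X i) * exp (lam * a) + (X i - a) * exp (lam * b)) / r)) =
    (b * exp (lam * a) - a * exp (lam * b)) / r.
  have -> : \big[Rplus/0]_i (p i * (((b - X i) * exp (lam * a) + (X i - a) * exp (lam * b)) / r)) =
    \big[Rplus/0]_i (p i * ((b * exp (lam * a) - a * exp (lam * b)) / r) + (p i * X i) * ((exp (lam * b) - exp (lam * a)) / r)).
    apply: eq_bigr => i _; field; lra.
  rewrite big_split /= -!big_distrl /= H1 H0; ring.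
rewrite E2 in E.
apply: (Rle_trans _ _ _ E).
set th := - a / r.
set u := lam * r.
have Hth : 0 <= th <= 1.
  rewrite /th; split.
    apply: Rmult_le_pos; [lra | apply: Rlt_le; apply: Rinv_0_lt_compat; lra].
  apply (Rmult_le_reg_r r) => //.
  have -> : - a / r * r = - a by field; lra.
  rewrite /b in Hb; lra.
have Hu : 0 <= u by rewrite /u; nra.
have := @hoeff_scalar th u Hth Hu.
have -> : u ^ 2 / 8 = lam ^ 2 * r ^ 2 / 8 by rewrite /u; field.
have -> : (1 - th + th * exp u) * exp (- th * u) = (b * exp (lam * a) - a * exp (lam * b)) / r; last done.
have Ea : lam * a = - th * u by rewrite /th /u; field; lra.
have Eb : lam * b = - th * u + u by rewrite /th /u /b; field; lra.
rewrite Ea Eb exp_plus /th /b; field; lra.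
Qed.

Set Implicit Arguments. Unset Strict Implicit.

Definition Mop (Z : nat) (M : 'I_Z -> 'I_Z -> R) (g : 'I_Z -> R) (i : 'I_Z) : R :=
  \big[Rplus/0]_(j < Z) (M i j * g j).

Definition rng (Z : nat) (g : 'I_Z -> R) (a r : R) : Prop := forall i, a <= g i <= a + r.

Lemma sum_const_R n c : \big[Rplus/0]_(j < n) c = INR n * c.
Proof.
elim: n => [|n IH]; first by rewrite big_ord0 /=; ring.
by rewrite big_ord_recr IH S_INR /=; ring.
Qed.

Lemma Mpg_iter Z (M : 'I_Z -> 'I_Z -> R) n (g : 'I_Z -> R) i :
  \big[Rplus/0]_(j < Z) (Mpow M n i j * g j) = iter n (Mop M) g i.
Proof.
elim: n g i => [|n IH] g i.
  rewrite /= (bigD1 i) //= eqxx big1 /=; first ring.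
  by move=> j /negbTE; rewrite eq_sym => ->; ring.
rewrite iterSr -IH /=.
under eq_bigr => j _ do rewrite big_distrl /=.
rewrite exchange_big /=; apply: eq_bigr => k _.
rewrite /Mop big_distrr /=; apply: eq_bigr => j _ /=; ring.
Qed.

Lemma Mop_const Z (M : 'I_Z -> 'I_Z -> R) (HM : stochastic M) c i :
  Mop M (fun _ => c) i = c.
Proof. by rewrite /Mop -big_distrl /= (proj2 HM i); ring. Qed.

Lemma Mpow_row Z (M : 'I_Z -> 'I_Z -> R) (HM : stochastic M) n i :
  \big[Rplus/0]_(j < Z) Mpow M n i j = 1.
Proof.
have -> : \big[Rplus/0]_(j < Z) Mpow M n i j = \big[Rplus/0]_(j < Z) (Mpow M n i j * 1).
  by apply: eq_bigr => j _ /=; ring.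
rewrite Mpg_iter; elim: n i => [|n IH] i //=.
rewrite /Mop (eq_bigr (fun j => M i j * 1)); last by move=> j _; rewrite IH.
by rewrite -big_distrl /= (proj2 HM i); ring.
Qed.

Lemma rng_Mop Z (M : 'I_Z -> 'I_Z -> R) (HM : stochastic M) g a r :
  rng g a r -> rng (Mop M g) a r.
Proof.
move=> Hg i; rewrite /Mop; split.
  rewrite -(Mop_const HM a i) /Mop; apply: sum_le => j _.
  by apply: Rmult_le_compat_l; [apply HM | apply Hg].
rewrite -(Mop_const HM (a + r) i) /Mop; apply: sum_le => j _.
by apply: Rmult_le_compat_l; [apply HM | apply Hg].
Qed.

Lemma rng_iter Z (M : 'I_Z -> 'I_Z -> R) (HM : stochastic M) n g a r :
  rng g a r -> rng (iter n (Mop M) g) a r.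
Proof. by move=> Hg; elim: n => //= n IH; apply: rng_Mop. Qed.

Lemma rng_contract Z (P : 'I_Z -> 'I_Z -> R) delta
  (Hrow : forall i, \big[Rplus/0]_(j < Z) P i j = 1) (Hd : forall i j, delta <= P i j)
  (HZ : INR Z * delta <= 1) g a r :
  rng g a r ->
  rng (fun i => \big[Rplus/0]_(j < Z) (P i j * g j))
      (a * (1 - INR Z * delta) + delta * \big[Rplus/0]_(j < Z) g j) ((1 - INR Z * delta) * r).
Proof.
move=> Hg i.
have E : \big[Rplus/0]_(j < Z) (P i j * g j) =
   \big[Rplus/0]_(j < Z) ((P i j - delta) * g j) + delta * \big[Rplus/0]_(j < Z) g j.
  rewrite big_distrr -big_split /=; apply: eq_bigr => j _ /=; ring.
have S : \big[Rplus/0]_(j < Z) (P i j - delta) = 1 - INR Z * delta.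
  have S' : \big[Rplus/0]_(j < Z) (P i j - delta) + \big[Rplus/0]_(j < Z) delta = \big[Rplus/0]_(j < Z) P i j.
    by rewrite -big_split; apply: eq_bigr => j _ /=; ring.
  rewrite sum_const_R Hrow in S'; lra.
rewrite E; split.
  suff : a * (1 - INR Z * delta) <= \big[Rplus/0]_(j < Z) ((P i j - delta) * g j) by lra.
  rewrite -S big_distrr /=; apply: sum_le => j _.
  rewrite (Rmult_comm a); apply: Rmult_le_compat_l; [have := Hd i j; lra | apply Hg].
suff : \big[Rplus/0]_(j < Z) ((P i j - delta) * g j) <= (a + r) * (1 - INR Z * delta) by lra.
rewrite -S big_distrr /=; apply: sum_le => j _.
rewrite (Rmult_comm (a + r)); apply: Rmult_le_compat_l; [have := Hd i j; lra | apply Hg].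
Qed.

Lemma rng_add Z (g h : 'I_Z -> R) a r b s :
  rng g a r -> rng h b s -> rng (fun i => g i + h i) (a + b) (r + s).
Proof. move=> Hg Hh i; have := Hg i; have := Hh i; lra. Qed.

Lemma rng_weak Z (g : 'I_Z -> R) a r s : rng g a r -> r <= s -> rng g a s.
Proof. move=> Hg Hrs i; have := Hg i; lra. Qed.

Lemma powR_le1 (x : R) k : 0 <= x <= 1 -> x ^ k <= 1.
Proof.
move=> Hx; elim: k => [|k IH] /=; first lra.
have := pow_le x k (proj1 Hx); nra.
Qed.

Lemma geo_sum (rho : R) (N0 : nat) (HN0 : (1 <= N0)%N) (Hr : 0 <= rho < 1) K :
  \big[Rplus/0]_(n < K) rho ^ (n %/ N0) <= INR N0 / (1 - rho).
Proof.
have HN0R : 1 <= INR N0 by apply: (le_INR 1); apply/leP.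
have Hq : INR N0 <= INR N0 / (1 - rho).
  apply (Rmult_le_reg_r (1 - rho)); first lra.
  have -> : INR N0 / (1 - rho) * (1 - rho) = INR N0 by field; lra.
  nra.
elim/ltn_ind: K => K IH.
case: (ltnP K N0) => HK.
  apply: Rle_trans Hq.
  apply: (Rle_trans _ (\big[Rplus/0]_(n < K) 1)).
    apply: sum_le => n _; apply: powR_le1; lra.
  rewrite sum_const_R Rmult_1_r; apply: le_INR; apply/leP; exact: ltnW.
have -> : K = (N0 + (K - N0))%N by rewrite subnKC.
rewrite big_split_ord /=.
have E1 : \big[Rplus/0]_(i < N0) rho ^ (lshift (K - N0) i %/ N0) = INR N0.
  rewrite -[INR N0]Rmult_1_r -sum_const_R; apply: eq_bigr => i _ /=.
  by rewrite divn_small.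
have E2 : \big[Rplus/0]_(i < K - N0) rho ^ (rshift N0 i %/ N0) =
          rho * \big[Rplus/0]_(i < K - N0) rho ^ (i %/ N0).
  rewrite big_distrr /=; apply: eq_bigr => i _ /=.
  by rewrite divnDl // divnn HN0 add1n.
rewrite E1 E2.
have IH' := IH (K - N0)%N (ltac:(rewrite ltn_subrL; apply/andP; split => //; apply: leq_trans HN0 HK)).
have H1 : rho * \big[Rplus/0]_(i < K - N0) rho ^ (i %/ N0) <= rho * (INR N0 / (1 - rho)).
  apply: Rmult_le_compat_l; lra.
have H2 : INR N0 / (1 - rho) = INR N0 + rho * (INR N0 / (1 - rho)) by field; lra.
lra.
Qed.

Lemma rng_ext Z (g h : 'I_Z -> R) a r : rng g a r -> (forall i, g i = h i) -> rng h a r.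
Proof. by move=> Hg E i; rewrite -E. Qed.

Lemma rng_Mn Z (M : 'I_Z -> 'I_Z -> R) (HM : stochastic M) (N0 : nat) (HN0 : (1 <= N0)%N)
  delta (Hd : forall i j, delta <= Mpow M N0 i j) (HZ : INR Z * delta <= 1)
  (l : 'I_Z -> R) B (Hl : forall z, Rabs (l z) <= B) n :
  exists a, rng (iter n (Mop M) l) a (2 * B * (1 - INR Z * delta) ^ (n %/ N0)).
Proof.
elim/ltn_ind: n => n IH.
case: (ltnP n N0) => Hn.
  exists (- B); rewrite divn_small // /= Rmult_1_r.
  apply: rng_iter => // i; move: (Hl i); rewrite /Rabs; case: Rcase_abs => ?; lra.
have En : n = ((n - N0) + N0)%N by rewrite subnK.
have [a Ha] := IH (n - N0)%N (ltac:(rewrite ltn_subrL; apply/andP; split => //; apply: leq_trans HN0 Hn)).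
eexists.
apply: rng_ext.
  apply: rng_weak.
    apply: (rng_contract (P := Mpow M N0) (Mpow_row HM N0) Hd HZ Ha).
  apply: Req_le; rewrite {2}En divnDr // divnn HN0 addn1 /=; ring.
move=> i /=; by rewrite Mpg_iter -iterD addnC -En.
Qed.

Definition Hs Z (M : 'I_Z -> 'I_Z -> R) (l : 'I_Z -> R) (m : nat) (x : 'I_Z) : R :=
  \big[Rplus/0]_(n < m.+1) iter n (Mop M) l x.

Lemma Mop_sum Z (M : 'I_Z -> 'I_Z -> R) k (F : nat -> 'I_Z -> R) x :
  Mop M (fun y => \big[Rplus/0]_(n < k) F n y) x = \big[Rplus/0]_(n < k) Mop M (F n) x.
Proof.
rewrite /Mop; under eq_bigr => j _ do rewrite big_distrr.
by rewrite exchange_big.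
Qed.

Lemma Hs_rec Z (M : 'I_Z -> 'I_Z -> R) l m x :
  Hs M l m.+1 x = l x + Mop M (Hs M l m) x.
Proof.
rewrite /Hs big_ord_recl /= Mop_sum; congr Rplus; apply: eq_bigr => i _; by rewrite /= iterSr iterS.
Qed.

Lemma rng_Hs Z (M : 'I_Z -> 'I_Z -> R) (HM : stochastic M) (N0 : nat) (HN0 : (1 <= N0)%N)
  delta (Hd : forall i j, delta <= Mpow M N0 i j) (HZ : INR Z * delta <= 1) (HZ0 : 0 < INR Z * delta)
  (l : 'I_Z -> R) B (HB : 0 <= B) (Hl : forall z, Rabs (l z) <= B) m :
  exists a, rng (Hs M l m) a (2 * B * INR N0 / (INR Z * delta)).
Proof.
suff [a Ha] : exists a, rng (Hs M l m) a (2 * B * \big[Rplus/0]_(n < m.+1) (1 - INR Z * delta) ^ (n %/ N0)).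
  exists a; apply: (rng_weak Ha).
  have := @geo_sum (1 - INR Z * delta) N0 HN0 (ltac:(lra)) m.+1.
  have -> : 1 - (1 - INR Z * delta) = INR Z * delta by ring.
  move=> H; have -> : 2 * B * INR N0 / (INR Z * delta) = 2 * B * (INR N0 / (INR Z * delta)) by rewrite /Rdiv !Rmult_assoc.
  apply: Rmult_le_compat_l; lra.
elim: m => [|m [a Ha]].
  have [a0 Ha0] := rng_Mn HM HN0 Hd HZ Hl 0.
  exists a0; apply: rng_ext.
    apply: (rng_weak Ha0); apply: Req_le; rewrite big_ord1 /=; ring.
  by move=> i; rewrite /Hs big_ord1.
have [b Hb] := rng_Mn HM HN0 Hd HZ Hl m.+1.
exists (a + b); apply: rng_ext.
  apply: rng_weak; first exact: rng_add Ha Hb.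
  apply: Req_le; rewrite [in RHS]big_ord_recr /=; ring.
by move=> i; rewrite /Hs [in RHS]big_ord_recr.
Qed.

Definition piE Z (pi : 'I_Z -> R) (g : 'I_Z -> R) : R := \big[Rplus/0]_(i < Z) (pi i * g i).

Lemma piE_Mop Z (M : 'I_Z -> 'I_Z -> R) pi (Hpi : stationary_dist M pi) g :
  piE pi (Mop M g) = piE pi g.
Proof.
rewrite /piE /Mop; under eq_bigr => i _ do rewrite big_distrr.
rewrite exchange_big /=; apply: eq_bigr => j _.
rewrite -(proj2 (proj2 Hpi) j) big_distrl /=; apply: eq_bigr => i _ /=; ring.
Qed.

Lemma piE_Hs Z (M : 'I_Z -> 'I_Z -> R) pi (Hpi : stationary_dist M pi) l m :
  piE pi (Hs M l m) = INR m.+1 * piE pi l.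
Proof.
elim: m => [|m IH].
  rewrite /piE /Hs /=; rewrite Rmult_1_l; apply: eq_bigr => i _; by rewrite big_ord1.
have -> : piE pi (Hs M l m.+1) = piE pi l + piE pi (Mop M (Hs M l m)).
  rewrite /piE -big_split; apply: eq_bigr => i _ /=; rewrite Hs_rec; ring.
rewrite piE_Mop // IH [INR m.+2]S_INR; ring.
Qed.

Definition pjoin (Z n : nat) (p : {ffun 'I_n.+1 -> 'I_Z} * 'I_Z) : {ffun 'I_n.+2 -> 'I_Z} :=
  [ffun j : 'I_n.+2 => if (j < n.+1)%N then p.1 (inord j) else p.2].

Definition psplit (Z n : nat) (s : {ffun 'I_n.+2 -> 'I_Z}) : {ffun 'I_n.+1 -> 'I_Z} * 'I_Z :=
  ([ffun i : 'I_n.+1 => s (inord i)], s (inord n.+1)).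

Lemma pjoin_inord Z n (g : {ffun 'I_n.+1 -> 'I_Z}) x k :
  (k < n.+1)%N -> pjoin (g, x) (inord k) = g (inord k).
Proof. move=> Hk; rewrite /pjoin ffunE /= inordK ?Hk //; exact: ltnW. Qed.

Lemma pjoin_last Z n (g : {ffun 'I_n.+1 -> 'I_Z}) x :
  pjoin (g, x) (inord n.+1) = x.
Proof. by rewrite /pjoin ffunE /= inordK // ltnn. Qed.

Lemma pjoinK Z n : cancel (@psplit Z n) (@pjoin Z n).
Proof.
move=> s; apply/ffunP => j; rewrite /pjoin /psplit ffunE /=.
case: ifP => Hj.
  rewrite ffunE; congr (s _); apply: val_inj; rewrite /= !inordK //; exact: ltnW.
congr (s _); apply: val_inj; rewrite /= inordK //.
have := ltn_ord j; move: Hj; rewrite ltnS => /negbT; rewrite -ltnNge => H1 H2.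
by apply/eqP; rewrite eqn_leq H1 -ltnS H2.
Qed.

Lemma psplitK Z n : cancel (@pjoin Z n) (@psplit Z n).
Proof.
move=> [g x]; rewrite /psplit pjoin_last; congr pair.
apply/ffunP => i; rewrite ffunE pjoin_inord //; by rewrite inord_val.
Qed.

Lemma path_bound Z n (a : 'I_Z -> R) (K : nat -> 'I_Z -> 'I_Z -> R) A C :
  (forall x, 0 <= a x) -> (forall t x y, 0 <= K t x y) ->
  \big[Rplus/0]_(x < Z) a x <= A -> (forall t x, \big[Rplus/0]_(y < Z) K t x y <= C) -> 0 <= C ->
  \big[Rplus/0]_(s : {ffun 'I_n.+1 -> 'I_Z})
     (a (s ord0) * \big[Rmult/1]_(i < n) K i (s (inord i)) (s (inord i.+1))) <= A * C ^ n.
Proof.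
move=> Ha HK HA HC HC0.
elim: n => [|n IH].
  rewrite (reindex (fun x : 'I_Z => [ffun _ : 'I_1 => x])) /=.
    rewrite /= Rmult_1_r; apply: Rle_trans HA; apply: Req_le.
    by apply: eq_bigr => x _; rewrite big_ord0 ffunE Rmult_1_r.
  exists (fun s : {ffun 'I_1 -> 'I_Z} => s ord0) => [x _|s _]; first by rewrite ffunE.
  by apply/ffunP => i; rewrite ffunE ord1.
rewrite (reindex (@pjoin Z n)) /=; last first.
  by exists (@psplit Z n) => [p _|s _]; [rewrite psplitK | rewrite pjoinK].
rewrite -(pair_big xpredT xpredT (fun g x => a (pjoin (g, x) ord0) *
     \big[Rmult/1]_(i < n.+1) K i (pjoin (g, x) (inord i)) (pjoin (g, x) (inord i.+1)))) /=.
have E : forall g : {ffun 'I_n.+1 -> 'I_Z},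
   \big[Rplus/0]_(x < Z) (a (pjoin (g, x) ord0) *
     \big[Rmult/1]_(i < n.+1) K i (pjoin (g, x) (inord i)) (pjoin (g, x) (inord i.+1)))
   = (a (g ord0) * \big[Rmult/1]_(i < n) K i (g (inord i)) (g (inord i.+1))) *
     \big[Rplus/0]_(x < Z) K n (g (inord n)) x.
  move=> g; rewrite big_distrr /=; apply: eq_bigr => x _.
  have -> : (ord0 : 'I_n.+2) = inord 0 by apply: val_inj; rewrite /= inordK.
  rewrite pjoin_inord // big_ord_recr /= pjoin_last pjoin_inord //.
  have -> : (inord 0 : 'I_n.+1) = ord0 by apply: val_inj; rewrite /= inordK.
  rewrite -!Rmult_assoc; congr (_ * _ * _).
  apply: eq_bigr => i _; rewrite !pjoin_inord //.
    by rewrite ltnS; apply: ltn_ord.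
  by apply: ltnW; rewrite ltnS; apply: ltn_ord.
rewrite (eq_bigr _ (fun g _ => E g)).
apply: (Rle_trans _ (\big[Rplus/0]_(g : {ffun 'I_n.+1 -> 'I_Z})
   ((a (g ord0) * \big[Rmult/1]_(i < n) K i (g (inord i)) (g (inord i.+1))) * C))).
  apply: sum_le => g _; apply: Rmult_le_compat_l => //.
  apply: Rmult_le_pos => //; apply: prod_ge0 => i _; exact: HK.
rewrite -big_distrl /=.
have -> : A * (C * C ^ n) = A * C ^ n * C by ring.
by apply: Rmult_le_compat_r.
Qed.

Lemma path_prob_eq Z n (M : 'I_Z -> 'I_Z -> R) pi (s : {ffun 'I_n.+1 -> 'I_Z}) :
  path_prob M pi s = pi (s ord0) * \big[Rmult/1]_(i < n) M (s (inord i)) (s (inord i.+1)).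
Proof.
rewrite /path_prob; congr Rmult.
  by rewrite (big_pred1 ord0) // => t; rewrite /= -[t == ord0]/(val t == 0%N).
rewrite big_ord_recr /= [X in _ * X]big_pred0; last first.
  move=> u /=; apply/negbTE; rewrite neq_ltn; apply/orP; left; exact: ltn_ord.
rewrite Rmult_1_r; apply: eq_bigr => i _.
rewrite (big_pred1 (inord i.+1)); last first.
  by move=> u /=; rewrite -val_eqE /= inordK // ltnS ltn_ord.
congr (M (s _) _); apply: val_inj; rewrite /= inordK //; apply: ltnW; exact: ltn_ord.
Qed.

Lemma telescope (G : nat -> R) n :
  \big[Rplus/0]_(i < n) (G i.+1 - G i) = G n - G 0%N.
Proof.
elim: n => [|n IH]; first by rewrite big_ord0 /=; ring.
by rewrite big_ord_recr /= IH; ring.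
Qed.

Definition D0 Z (M : 'I_Z -> 'I_Z -> R) pi l n (x : 'I_Z) := Hs M l n x - piE pi (Hs M l n).
Definition Dk Z (M : 'I_Z -> 'I_Z -> R) l n (i : nat) (x y : 'I_Z) :=
  Hs M l (n - i.+1) y - Mop M (Hs M l (n - i.+1)) x.

Arguments D0 : simpl never.
Arguments Dk : simpl never.

Lemma Hs0 Z (M : 'I_Z -> 'I_Z -> R) l x : Hs M l 0 x = l x.
Proof. by rewrite /Hs big_ord1. Qed.

Lemma decomp Z n (M : 'I_Z -> 'I_Z -> R) pi (Hpi : stationary_dist M pi) l (s : {ffun 'I_n.+1 -> 'I_Z}) :
  \big[Rplus/0]_(t : 'I_n.+1) l (s t) - INR n.+1 * piE pi l =
  D0 M pi l n (s ord0) + \big[Rplus/0]_(i < n) Dk M l n i (s (inord i)) (s (inord i.+1)).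
Proof.
rewrite S_INR; set ss := fun k : nat => s (inord k).
have E1 : \big[Rplus/0]_(t : 'I_n.+1) l (s t) = \big[Rplus/0]_(i < n.+1) l (ss i).
  by apply: eq_bigr => i _; rewrite /ss inord_val.
have E2 : forall i : 'I_n, Dk M l n i (s (inord i)) (s (inord i.+1)) =
    (Hs M l (n - i.+1) (ss i.+1) - Hs M l (n - i) (ss i)) + l (ss i).
  move=> i; rewrite /Dk /ss.
  have Hi : (n - i = (n - i.+1).+1)%N by rewrite subnSK //; apply: ltn_ord.
  rewrite Hi Hs_rec; ring.
rewrite (eq_bigr _ (fun i _ => E2 i)) big_split /=.
rewrite (telescope (fun i => Hs M l (n - i) (ss i))) subnn subn0 Hs0.
rewrite E1 big_ord_recr /= /D0 piE_Hs // S_INR.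
have -> : s ord0 = ss 0%N by rewrite /ss; congr (s _); apply: val_inj; rewrite /= inordK.
ring.
Qed.

Lemma mgf_bound Z (M : 'I_Z -> 'I_Z -> R) (HM : stochastic M) pi (Hpi : stationary_dist M pi)
  (N0 : nat) (HN0 : (1 <= N0)%N) delta (Hd : forall i j, delta <= Mpow M N0 i j)
  (HZ : INR Z * delta <= 1) (HZ0 : 0 < INR Z * delta)
  (l : 'I_Z -> R) B (HB : 0 <= B) (Hl : forall z, Rabs (l z) <= B) lam (Hlam : 0 <= lam) n :
  \big[Rplus/0]_(s : {ffun 'I_n.+1 -> 'I_Z})
     (path_prob M pi s * exp (lam * (\big[Rplus/0]_(t : 'I_n.+1) l (s t) - INR n.+1 * piE pi l)))
  <= exp (lam ^ 2 * (2 * B * INR N0 / (INR Z * delta)) ^ 2 / 8) *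
     exp (lam ^ 2 * (2 * B * INR N0 / (INR Z * delta)) ^ 2 / 8) ^ n.
Proof.
have Hrng := rng_Hs HM HN0 Hd HZ HZ0 HB Hl.
set r := 2 * B * INR N0 / (INR Z * delta) in Hrng *.
set a := fun x => pi x * exp (lam * D0 M pi l n x).
set K := fun i x y => M x y * exp (lam * Dk M l n i x y).
rewrite (eq_bigr (fun s : {ffun 'I_n.+1 -> 'I_Z} =>
   a (s ord0) * \big[Rmult/1]_(i < n) K i (s (inord i)) (s (inord i.+1)))); last first.
  move=> s _; rewrite (decomp Hpi) path_prob_eq /a /K.
  rewrite [in RHS]big_split.
  rewrite Rmult_plus_distr_l exp_plus big_distrr (big_morph _ exp_plus exp_0).
  rewrite /=; ring.
apply: path_bound.
- move=> x; rewrite /a; apply: Rmult_le_pos; [apply Hpi | apply: Rlt_le; apply: exp_pos].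
- move=> t x y; rewrite /K; apply: Rmult_le_pos; [apply HM | apply: Rlt_le; apply: exp_pos].
- have [a0 Ha0] := Hrng n.
  apply: (@hoeffding _ pi (D0 M pi l n) (a0 - piE pi (Hs M l n)) r lam) => //.
  + apply Hpi.
  + apply Hpi.
  + rewrite /D0.
    have -> : \big[Rplus/0]_i (pi i * (Hs M l n i - piE pi (Hs M l n))) =
       piE pi (Hs M l n) - piE pi (Hs M l n) * \big[Rplus/0]_i pi i.
      rewrite big_distrr /piE /=.
      have E : forall F G : 'I_Z -> R, \big[Rplus/0]_i (F i - G i) = \big[Rplus/0]_i F i - \big[Rplus/0]_i G i.
        by move=> F G; rewrite /Rminus big_split /= (big_morph _ Ropp_plus_distr Ropp_0).
      rewrite -E; apply: eq_bigr => i _ /=; ring.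
    rewrite (proj1 (proj2 Hpi)); ring.
  + move=> i; rewrite /D0; have := Ha0 i; lra.
- move=> t x.
  have [a0 Ha0] := Hrng (n - t.+1)%N.
  apply: (@hoeffding _ (M x) (Dk M l n t x) (a0 - Mop M (Hs M l (n - t.+1)) x) r lam) => //.
  + move=> y; apply HM.
  + apply HM.
  + rewrite /Dk.
    have -> : \big[Rplus/0]_i (M x i * (Hs M l (n - t.+1) i - Mop M (Hs M l (n - t.+1)) x)) =
       Mop M (Hs M l (n - t.+1)) x - Mop M (Hs M l (n - t.+1)) x * \big[Rplus/0]_i M x i.
      rewrite big_distrr /Mop /=.
      have E : forall F G : 'I_Z -> R, \big[Rplus/0]_i (F i - G i) = \big[Rplus/0]_i F i - \big[Rplus/0]_i G i.
        by move=> F G; rewrite /Rminus big_split /= (big_morph _ Ropp_plus_distr Ropp_0).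
      rewrite -E; apply: eq_bigr => i _ /=; ring.
    rewrite (proj2 HM x); ring.
  + move=> y; rewrite /Dk; have := Ha0 y; lra.
- apply: Rlt_le; apply: exp_pos.
Qed.

Lemma exp_pow_n c n : exp c ^ n = exp (INR n * c).
Proof.
elim: n => [|n IH]; first by rewrite /= Rmult_0_l exp_0.
by rewrite [exp c ^ n.+1]/= IH -exp_plus S_INR; congr exp; ring.
Qed.

Lemma path_prob_ge0 Z n (M : 'I_Z -> 'I_Z -> R) (HM : stochastic M) pi (Hpi : stationary_dist M pi)
  (s : {ffun 'I_n.+1 -> 'I_Z}) : 0 <= path_prob M pi s.
Proof.
rewrite path_prob_eq; apply: Rmult_le_pos; first by apply Hpi.
apply: prod_ge0 => i _; apply HM.
Qed.

Lemma upper_tail Z (M : 'I_Z -> 'I_Z -> R) (HM : stochastic M) pi (Hpi : stationary_dist M pi)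
  (N0 : nat) (HN0 : (1 <= N0)%N) delta (Hd : forall i j, delta <= Mpow M N0 i j)
  (HZ : INR Z * delta <= 1) (HZ0 : 0 < INR Z * delta)
  (l : 'I_Z -> R) B (HB : 0 < B) (Hl : forall z, Rabs (l z) <= B) eps (Heps : 0 < eps) n :
  \big[Rplus/0]_(s : {ffun 'I_n.+1 -> 'I_Z})
     (if Rleb eps (err_S l s - err_pi pi l) then path_prob M pi s else 0)
  <= exp (- 2 * INR n.+1 * eps ^ 2 / (2 * B * INR N0 / (INR Z * delta)) ^ 2).
Proof.
set r := 2 * B * INR N0 / (INR Z * delta).
have HN0R : 1 <= INR N0 by apply: (le_INR 1); apply/leP.
have Hr : 0 < r.
  rewrite /r /Rdiv; apply: Rmult_lt_0_compat; last by apply: Rinv_0_lt_compat.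
  nra.
set lam := 4 * eps / r ^ 2.
have Hlam : 0 <= lam.
  rewrite /lam /Rdiv; apply: Rmult_le_pos; first lra.
  apply: Rlt_le; apply: Rinv_0_lt_compat; nra.
have HT : 0 < INR n.+1 by apply: lt_0_INR; apply/ltP.
have Hm := mgf_bound HM Hpi HN0 Hd HZ HZ0 (Rlt_le _ _ HB) Hl Hlam n.
rewrite -/r exp_pow_n -exp_plus in Hm.
have HTn : INR n.+1 = INR n + 1 by rewrite S_INR.
set T := INR n.+1 in HT Hm HTn *.
apply: (Rle_trans _ (\big[Rplus/0]_(s : {ffun 'I_n.+1 -> 'I_Z})
   (path_prob M pi s * exp (lam * (\big[Rplus/0]_(t : 'I_n.+1) l (s t) - T * piE pi l))) *
   exp (- (lam * T * eps)))).
  rewrite big_distrl /=; apply: sum_le => s _.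
  have Hp := path_prob_ge0 HM Hpi s.
  rewrite /Rleb; case: Rle_dec => Hc; last first.
    apply: Rmult_le_pos; [apply: Rmult_le_pos => //| ]; apply: Rlt_le; apply: exp_pos.
  rewrite Rmult_assoc -exp_plus.
  have : 0 <= lam * (\big[Rplus/0]_(t : 'I_n.+1) l (s t) - T * piE pi l) + - (lam * T * eps).
    move: Hc; rewrite /err_S /err_pi -/(piE pi l) -/T.
    set S := \big[Rplus/0]_(t : 'I_n.+1) l (s t).
    move=> Hc.
    have -> : lam * (S - T * piE pi l) + - (lam * T * eps) =
              lam * T * (/ T * S - piE pi l - eps) by field; lra.
    apply: Rmult_le_pos; [apply: Rmult_le_pos; lra | lra].
  move=> H0; have := exp_ineq1_le (lam * (\big[Rplus/0]_(t : 'I_n.+1) l (s t) - T * piE pi l) +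
     - (lam * T * eps)).
  move=> H1; have : 1 <= exp (lam * (\big[Rplus/0]_(t : 'I_n.+1) l (s t) - T * piE pi l) +
     - (lam * T * eps)) by lra.
  rewrite /=; nra.
apply: (Rle_trans _ (exp (lam ^ 2 * r ^ 2 / 8 + INR n * (lam ^ 2 * r ^ 2 / 8)) * exp (- (lam * T * eps)))).
  apply: Rmult_le_compat_r => //; apply: Rlt_le; apply: exp_pos.
rewrite -exp_plus; apply: Req_le; congr exp.
rewrite /lam HTn; field; lra.
Qed.

Lemma sum_opp (I : Type) (r : seq I) (F : I -> R) :
  \big[Rplus/0]_(i <- r) (- F i) = - \big[Rplus/0]_(i <- r) F i.
Proof. by rewrite (big_morph _ Ropp_plus_distr Ropp_0). Qed.

Lemma err_S_opp Z T (l : 'I_Z -> R) (s : {ffun 'I_T -> 'I_Z}) :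
  err_S (fun z => - l z) s = - err_S l s.
Proof. by rewrite /err_S sum_opp Ropp_mult_distr_r. Qed.

Lemma err_pi_opp Z (pi l : 'I_Z -> R) : err_pi pi (fun z => - l z) = - err_pi pi l.
Proof.
rewrite /err_pi -sum_opp; apply: eq_bigr => i _ /=; ring.
Qed.

Unset Implicit Arguments.

Theorem theorem2
  (H Bt : finType) (N Z : nat)
  (zof : 'I_Z -> vecH H N * vecB Bt N * vecB Bt N) (zof_inj : injective zof)
  (M : 'I_Z -> 'I_Z -> R) (HM : stochastic M) (Hirr : irreducible M)
  (pi : 'I_Z -> R) (Hpi : stationary_dist M pi)
  (N0 : nat) (HN0 : (1 <= N0)%nat) (Hpos : forall i j, 0 < Mpow M N0 i j)
  (delta : R) (Hdelta_le : forall i j, delta <= Mpow M N0 i j)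
  (Hdelta_att : exists i j, Mpow M N0 i j = delta)
  (f : vecH H N -> vecB Bt N -> vecB Bt N) (ell : vecB Bt N -> vecB Bt N -> R)
  (B : R) (HB : 0 < B) (Hbound : forall z : 'I_Z, Rabs (loss f ell (zof z)) <= B)
  (eps : R) (Heps : 0 < eps) (T : nat)
  (HT : INR T > 2 * B * INR N0 / (INR Z * delta * eps)) :
  let l := fun z : 'I_Z => loss f ell (zof z) in
  prob M pi (fun s : {ffun 'I_T -> 'I_Z} => Rleb eps (Rabs (err_S l s - err_pi pi l)))
  <= 2 * exp (- (INR Z ^ 2 * delta ^ 2 * (INR T * eps - 2 * B * INR N0 / (INR Z * delta)) ^ 2)
               / (2 * INR T * B ^ 2 * INR N0 ^ 2)).
Proof.
move=> l.
have [i0 [j0 Hij]] := Hdelta_att.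
have Hdelta : 0 < delta by rewrite -Hij.
have HZ1 : 1 <= INR Z.
  apply: (le_INR 1); apply/leP; exact: (leq_ltn_trans (leq0n i0) (ltn_ord i0)).
have HZ0 : 0 < INR Z * delta by nra.
have HZ : INR Z * delta <= 1.
  have H1 := Mpow_row HM N0 i0.
  have : \big[Rplus/0]_(j < Z) delta <= \big[Rplus/0]_(j < Z) Mpow M N0 i0 j by apply: sum_le.
  rewrite sum_const_R; lra.
have HN0R : 1 <= INR N0 by apply: (le_INR 1); apply/leP.
set r := 2 * B * INR N0 / (INR Z * delta).
have Hr : 0 < r.
  rewrite /r /Rdiv; apply: Rmult_lt_0_compat; last by apply: Rinv_0_lt_compat.
  nra.
have HTr : r < INR T * eps.
  have E : 2 * B * INR N0 / (INR Z * delta * eps) = r / eps by rewrite /r; field; split; lra.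
  rewrite E in HT.
  have := Rmult_lt_compat_r eps _ _ Heps HT.
  have -> : r / eps * eps = r by field; lra.
  lra.
case: T HT HTr => [|n] HT HTr.
  have : 0 <= r by lra.
  rewrite /= in HTr; lra.
have Hl : forall z, Rabs (l z) <= B by [].
have Hl' : forall z, Rabs ((fun z => - l z) z) <= B by move=> z /=; rewrite Rabs_Ropp.
have U1 := upper_tail HM Hpi HN0 Hdelta_le HZ HZ0 HB Hl Heps n.
have U2 := upper_tail HM Hpi HN0 Hdelta_le HZ HZ0 HB Hl' Heps n.
rewrite -/r in U1 U2.
apply: (Rle_trans _ (exp (- 2 * INR n.+1 * eps ^ 2 / r ^ 2) + exp (- 2 * INR n.+1 * eps ^ 2 / r ^ 2))).
  apply: (Rle_trans _ _ _ _ (Rplus_le_compat _ _ _ _ U1 U2)).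
  rewrite /prob -big_split /=; apply: sum_le => s _.
  have Hp := path_prob_ge0 HM Hpi s.
  have -> : err_S (fun z => - l z) s - err_pi pi (fun z => - l z) = - (err_S l s - err_pi pi l).
    rewrite err_S_opp err_pi_opp; ring.
  rewrite /Rleb; case: Rle_dec => H1; case: Rle_dec => H2; case: Rle_dec => H3 //=; try lra.
  move: H1; rewrite /Rabs; case: Rcase_abs => ?; lra.
set t := INR n.+1 in HT HTr *.
have Ht : 0 < t by rewrite /t; apply: lt_0_INR; apply/ltP.
have E : - (INR Z ^ 2 * delta ^ 2 * (t * eps - r) ^ 2) / (2 * t * B ^ 2 * INR N0 ^ 2)
         = - (2 * (t * eps - r) ^ 2 / (t * r ^ 2)).
  rewrite /r; field; repeat split; try lra; nra.
rewrite E.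
have Hle : - (2 * (t * eps - r) ^ 2 / (t * r ^ 2)) >= - 2 * t * eps ^ 2 / r ^ 2.
  have E2 : - 2 * t * eps ^ 2 / r ^ 2 = - (2 * (t * eps) ^ 2 / (t * r ^ 2)) by field; lra.
  rewrite E2; apply: Ropp_le_ge_contravar.
  rewrite /Rdiv; apply: Rmult_le_compat_r.
    apply: Rlt_le; apply: Rinv_0_lt_compat; apply: Rmult_lt_0_compat => //; exact: (pow_lt r 2 Hr).
  have := Rmult_le_pos r (2 * t * eps - r) (ltac:(lra)) (ltac:(lra)); nra.
have Hexp : exp (- 2 * t * eps ^ 2 / r ^ 2) <= exp (- (2 * (t * eps - r) ^ 2 / (t * r ^ 2))).
  case: (Rle_lt_or_eq_dec _ _ (Rge_le _ _ Hle)) => Hc.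
    apply: Rlt_le; exact: exp_increasing.
  by rewrite Hc; apply: Rle_refl.
lra.
Qed.
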